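(* Let $p$ be an odd prime and $\chi$ a primitive Dirichlet character with odd conductor $f$. For every integer $n\ge0$, in $\mathbb Q_p(\chi)$, $$E_{n,\chi}=\lim_{N\to\infty}\sum_{a=1}^{fp^N}(-1)^a\chi(a)a^n .$$
   Context: We set $\chi(a)=0$ if $a$ is not prime to $f$. The generalized Euler numbers are defined by $2\sum_{a=1}^{f}\frac{(-1)^a\chi(a)e^{at}}{e^{ft}+1}=\sum_{n\ge0}E_{n,\chi}\frac{t^n}{n!}$; they lie in $\mathbb Q(\chi)$, viewed inside $\mathbb Q_p(\chi)$, the field generated over $\mathbb Q_p$ by the values of $\chi$. The limit is in the $p$-adic topology. *)

(* Defs.v *)
From HB Require Import structures.
From mathcomp Require Import all_boot all_order all_algebra algC algnum.
Set Implicit Arguments. Unset Strict Implicit. Unset Printing Implicit Defensive.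
Import Order.TTheory GRing.Theory Num.Theory.
Local Open Scope ring_scope.

Definition dirichlet_char (f : nat) (chi : nat -> algC) : Prop :=
  [/\ (0 < f)%N,
      chi 1%N = 1,
      (forall a b : nat, chi (a * b)%N = chi a * chi b),
      (forall a : nat, chi (a + f)%N = chi a) &
      (forall a : nat, (chi a == 0) = ~~ coprime a f)].

Definition primitive_char (f : nat) (chi : nat -> algC) : Prop :=
  dirichlet_char f chi /\
  forall d : nat, (d %| f)%N -> (d < f)%N ->
    ~ (forall a : nat, coprime a f -> (a %% d = 1 %% d)%N -> chi a = 1).

Definition expT (c : algC) (n : nat) : {poly algC} :=
  \poly_(k < n.+1) (c ^+ k / (k`!)%:R).

(* E : nat -> algC are the generalized Euler numbers E_{n,chi}:
   (sum_n E_n t^n/n!) * (e^{f t} + 1) = 2 sum_{a=1}^f (-1)^a chi(a) e^{a t}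
   as formal power series, i.e. modulo t^{n+1} for every n. *)
Definition gen_euler (f : nat) (chi : nat -> algC) (E : nat -> algC) : Prop :=
  forall n : nat,
    modp ((\poly_(k < n.+1) (E k / (k`!)%:R)) * (expT f%:R n + 1)) 'X^(n.+1) =
    2%:R *: \sum_(1 <= a < f.+1) (((-1) ^+ a * chi a) *: expT a%:R n).

(* p-adic convergence in Q(chi) (inside algC), simultaneously at all primes
   above p: for every k, eventually (u N - l) / p^k is p-integral, i.e.
   d * (u N - l) / p^k is an algebraic integer for some d prime to p. *)
Definition padic_cvg (p : nat) (u : nat -> algC) (l : algC) : Prop :=
  forall k : nat, exists N0 : nat, forall N : nat, (N0 <= N)%N ->
    exists d : nat, coprime d p /\
      (d%:R * (u N - l) / (p%:R ^+ k)) \in Aint.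

Definition euler_partial (p f : nat) (chi : nat -> algC) (n N : nat) : algC :=
  \sum_(1 <= a < (f * p ^ N).+1) (-1) ^+ a * chi a * (a%:R) ^+ n.

(* Main.v *)
Require Import Defs.
From mathcomp Require Import all_boot all_order all_algebra algC algnum.
From mathcomp Require Import ring.
From mathcomp Require cyclic.
Import Order.TTheory GRing.Theory Num.Theory.
Local Open Scope ring_scope.

Lemma fact_neq0 k : (k`!)%:R != 0 :> algC.
Proof. by rewrite pnatr_eq0 -lt0n fact_gt0. Qed.

Lemma binR k i : (i <= k)%N ->
  'C(k, i)%:R = (k`!)%:R / ((i`!)%:R * ((k - i)`!)%:R) :> algC.
Proof.
move=> hi; rewrite -(bin_fact hi) !natrM mulfK //.
by rewrite mulf_neq0 // fact_neq0.
Qed.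

Lemma coef_expT c n k : (expT c n)`_k = if (k < n.+1)%N then c ^+ k / (k`!)%:R else 0.
Proof. by rewrite /expT coef_poly. Qed.

Lemma md_take (q : {poly algC}) m : modp q 'X^m = take_poly m q.
Proof. by rewrite Pdiv.IdomainMonic.take_poly_modp. Qed.

Lemma expT_mul c d n :
  modp (expT c n * expT d n) 'X^(n.+1) = expT (c + d) n.
Proof.
apply/polyP => k; rewrite md_take coef_take_poly coef_expT.
case: ifP => // hk; rewrite coefM.
rewrite addrC exprDn mulr_suml; apply: eq_bigr => i _.
have hi : (i <= k)%N by rewrite -ltnS.
have hi1 : (i < n.+1)%N by apply: leq_ltn_trans hk.
have hi2 : (k - i < n.+1)%N by apply: leq_ltn_trans (leq_subr i k) hk.
rewrite !coef_expT hi1 hi2.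
rewrite -(mulr_natr (d ^+ (k - i) * c ^+ i)) (@binR k i hi).
have := fact_neq0 i; have := fact_neq0 (k - i); have := fact_neq0 k.
move=> h1 h2 h3; field; by rewrite h1 h2 h3.
Qed.

Lemma expT0 n : expT 0 n = 1.
Proof.
apply/polyP => k; rewrite coef_expT coef1.
case: k => [|k] //=; first by rewrite expr0 divr1.
by rewrite expr0n /= mul0r; case: ifP.
Qed.

Lemma md_sum (I : Type) (r : seq I) (P : pred I) (F : I -> {poly algC}) m :
  modp (\sum_(i <- r | P i) F i) m = \sum_(i <- r | P i) modp (F i) m.
Proof. by apply: (big_morph (fun q => modp q m)); [move=> x y; rewrite modpD | rewrite mod0p]. Qed.

Lemma telesc (a : nat -> {poly algC}) K :
  \sum_(j < K) ((-1) ^+ j) *: (a j.+1 + a j) = a 0%N - ((-1) ^+ K) *: a K.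
Proof.
elim: K => [|K IH]; first by rewrite big_ord0 expr0 scale1r subrr.
rewrite big_ord_recr /= IH exprS mulN1r scalerDr !scaleNr.
by rewrite opprK; ring.
Qed.

Lemma reindex (F : nat -> {poly algC}) f K :
  \sum_(1 <= a < (K * f).+1) F a = \sum_(j < K) \sum_(1 <= b < f.+1) F (b + j * f)%N.
Proof.
elim: K => [|K IH]; first by rewrite big_ord0 mul0n big_geq.
rewrite big_ord_recr /= -IH mulSnr.
rewrite (@big_cat_nat _ _ _ (K * f).+1) //=; last by rewrite ltnS leq_addr.
congr (_ + _).
rewrite -{1}(add1n (K * f)) big_addn.
by rewrite -addnS addKn.
Qed.

Lemma coef_key (E : nat -> algC) n c m : (m <= n)%N ->
  (modp (\poly_(k < n.+1) (E k / (k`!)%:R) * (expT 0 n + expT c n)) 'X^(n.+1))`_m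
    * (m`!)%:R
  = E m + \sum_(i < m.+1) 'C(m, i)%:R * E i * c ^+ (m - i).
Proof.
move=> hm; rewrite md_take coef_take_poly ltnS hm coefM.
have e1 : forall i : 'I_m.+1, (\poly_(k < n.+1) (E k / (k`!)%:R))`_i = E i / (i`!)%:R.
  move=> i; rewrite coef_poly; have -> // : (i < n.+1)%N.
  by rewrite ltnS (leq_trans _ hm) // -ltnS.
have e2 : forall i : 'I_m.+1, (expT 0 n + expT c n)`_(m - i) =
    0 ^+ (m - i) / ((m - i)`!)%:R + c ^+ (m - i) / ((m - i)`!)%:R.
  by move=> i; rewrite coefD !coef_expT ltnS (leq_trans (leq_subr _ _) hm).
under eq_bigr do rewrite e1 e2 mulrDr.
rewrite big_split /= mulrDl; congr (_ + _).
  rewrite big_ord_recr /= subnn expr0 fact0 !divr1 big1 ?add0r.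
    by rewrite mulr1 divfK // fact_neq0.
  move=> i _; rewrite expr0n subn_eq0 leqNgt ltn_ord /= mul0r mulr0 //.
rewrite mulr_suml; apply: eq_bigr => i _.
have hi : (i <= m)%N by rewrite -ltnS.
rewrite (@binR m i hi).
have := fact_neq0 i; have := fact_neq0 (m - i); have := fact_neq0 m.
by move=> h1 h2 h3; field; rewrite h2 h3.
Qed.

Lemma ge_coef f chi E : gen_euler f chi E -> forall m,
  E m + \sum_(i < m.+1) 'C(m, i)%:R * E i * (f%:R) ^+ (m - i) =
  2%:R * \sum_(1 <= a < f.+1) (-1) ^+ a * chi a * (a%:R) ^+ m.
Proof.
move=> H m; have h := H m.
rewrite -(expT0 m) (addrC (expT _ m)) in h.
rewrite -(@coef_key E m _ m (leqnn m)) h coefZ coef_sum -mulrA mulr_suml.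
congr (_ * _); apply: eq_bigr => a _.
by rewrite coefZ coef_expT ltnS leqnn -mulrA divfK // fact_neq0.
Qed.

Lemma chi_per f chi : dirichlet_char f chi -> forall b j, chi (b + j * f)%N = chi b.
Proof.
case=> _ _ _ hP _ b; elim=> [|j IH]; first by rewrite mul0n addn0.
by rewrite mulSnr addnA hP.
Qed.

Lemma chi_mod f chi : dirichlet_char f chi -> forall a, chi a = chi (a %% f)%N.
Proof.
move=> hd a; rewrite {1}(divn_eq a f) addnC; exact: chi_per.
Qed.

Lemma chi_Aint f chi : dirichlet_char f chi -> forall a, chi a \in Aint.
Proof.
move=> hd a; have [hf h1 hM hP hZ] := hd.
case hc: (coprime a f); last first.
  by have /eqP -> : chi a == 0 by rewrite hZ hc.
have hX : forall k, chi (a ^ k)%N = chi a ^+ k.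
  by elim=> [|k IH]; rewrite ?expn0 ?expr0 // expnS exprS hM IH.
apply: (@Aint_unity_root (totient f)); first by rewrite totient_gt0.
rewrite unity_rootE -hX (@chi_mod _ _ hd) (cyclic.Euler_exp_totient hc) -(@chi_mod _ _ hd) h1.
by [].
Qed.

Lemma G_Aint f chi : dirichlet_char f chi -> forall m,
  \sum_(1 <= a < f.+1) (-1) ^+ a * chi a * (a%:R) ^+ m \in Aint.
Proof.
move=> hd m; apply: rpred_sum => a _.
by rewrite !rpredM ?rpredX ?rpredN ?rpred1 ?rpred_nat ?(@chi_Aint _ _ hd a).
Qed.

Lemma E_Aint f chi E : dirichlet_char f chi -> gen_euler f chi E ->
  forall m, 2%:R ^+ m.+1 * E m \in Aint.
Proof.
move=> hd hE; elim/ltn_ind => m IH.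
have h := @ge_coef _ _ _ hE m.
set Gm := \sum_(1 <= a < f.+1) _ in h.
rewrite big_ord_recr /= binn subnn expr0 mulr1 mul1r in h.
set R := \sum_(i < m) _ in h.
have h2 : 2%:R * E m = 2%:R * Gm - R by rewrite -h; ring.
have hR : \sum_(i < m) 'C(m, i)%:R * (f%:R) ^+ (m - i) * 2%:R ^+ (m - i.+1)
      * (2%:R ^+ i.+1 * E i) = 2%:R ^+ m * R.
  rewrite /R mulr_sumr; apply: eq_bigr => i _.
  have e : (2%:R : algC) ^+ m = 2%:R ^+ (m - i.+1) * 2%:R ^+ i.+1.
    by rewrite -exprD subnK.
  rewrite e; ring.
have -> : 2%:R ^+ m.+1 * E m = 2%:R ^+ m.+1 * Gm -
   \sum_(i < m) 'C(m, i)%:R * (f%:R) ^+ (m - i) * 2%:R ^+ (m - i.+1)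
      * (2%:R ^+ i.+1 * E i).
  by rewrite hR exprSr -mulrA h2; ring.
apply: rpredB; first by rewrite rpredM ?rpredX ?rpred_nat ?(@G_Aint _ _ hd).
apply: rpred_sum => i _; apply: rpredM; last exact: IH.
by rewrite !rpredM ?rpredX ?rpred_nat.
Qed.

Lemma sgn_odd (k : nat) : odd k -> (-1 : algC) ^+ k = -1.
Proof. by move=> hk; rewrite -signr_odd hk expr1. Qed.

Lemma main_id p f chi E n N : odd p -> odd f -> dirichlet_char f chi ->
  gen_euler f chi E ->
  2%:R * euler_partial p f chi n N =
  E n + \sum_(i < n.+1) 'C(n, i)%:R * E i * ((f * p ^ N)%:R) ^+ (n - i).
Proof.
move=> hp hf hd hE.
set K := (p ^ N)%N.
have hK : odd K by rewrite /K oddX hp orbT.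
set T := fun c : algC => expT c n.
set PE := \poly_(k < n.+1) (E k / (k`!)%:R).
set G := \sum_(1 <= a < f.+1) ((-1) ^+ a * chi a) *: T a%:R.
set H := \sum_(j < K) (-1) ^+ j *: T (j * f)%:R.
set Ssum := \sum_(1 <= a < (K * f).+1) ((-1) ^+ a * chi a) *: T a%:R.
have hS : euler_partial p f chi n N = Ssum`_n * (n`!)%:R.
  rewrite /euler_partial /Ssum mulnC coef_sum mulr_suml; apply: eq_bigr => a _.
  by rewrite coefZ /T coef_expT ltnS leqnn -[RHS]mulrA divfK // fact_neq0.
have hD : modp (G * H) 'X^(n.+1) = Ssum.
  rewrite /G /H mulr_suml md_sum.
  under eq_bigr => a _ do rewrite mulr_sumr md_sum.
  rewrite exchange_big /Ssum reindex; apply: eq_bigr => j _.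
  apply: eq_bigr => a _.
  rewrite -scalerAl -scalerAr !modpZl /T expT_mul -natrD scalerA.
  have sj : (-1 : algC) ^+ (j * f) = (-1) ^+ j.
    by rewrite mulnC exprM sgn_odd.
  by rewrite (@chi_per _ _ hd) exprD sj; congr (_ *: _); ring.
have hT : modp ((T f%:R + T 0) * H) 'X^(n.+1) = T 0 + T (K * f)%:R.
  rewrite /H mulr_sumr md_sum.
  have := telesc (fun j => T (j * f)%:R) K; rewrite /= mul0n sgn_odd //.
  rewrite scaleN1r opprK => <-; apply: eq_bigr => j _.
  rewrite -scalerAr modpZl mulrDl modpD /T !expT_mul add0r -natrD.
  by rewrite mulSn.
have hE2 : 2%:R *: Ssum = modp (PE * (T 0 + T (K * f)%:R)) 'X^(n.+1).
  have hg := hE n; rewrite -/PE -/(T _) -/G in hg.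
  rewrite -hD -modpZl scalerAl -hg mulrC modp_mul.
  rewrite -hT modp_mul /T expT0; congr modp.
  by rewrite mulrC -mulrA.
by rewrite hS mulrA -coefZ hE2 coef_key // (mulnC f K).
Qed.

Theorem lemma2p1 (p f : nat) (chi : nat -> algC) (E : nat -> algC) :
  prime p -> odd p -> odd f -> primitive_char f chi -> gen_euler f chi E ->
  forall n : nat, padic_cvg p (euler_partial p f chi n) (E n).
Proof.
move=> hp hpo hf [hd _] hE n k; exists k => N hN; exists (2 ^ n.+1)%N; split.
  by rewrite coprimeXl // coprime2n.
set S := euler_partial p f chi n N.
set M := (f * p ^ N)%N.
have h2 := @main_id p f chi E n N hpo hf hd hE; rewrite -/S -/M in h2.
rewrite big_ord_recr /= binn subnn expr0 mulr1 mul1r in h2.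
have pk : (p%:R : algC) ^+ k != 0 by rewrite expf_neq0 // pnatr_eq0 -lt0n prime_gt0.
have eM : forall i : 'I_n, (M%:R : algC) ^+ (n - i) =
    ((f ^ (n - i) * p ^ (N * (n - i) - k))%N)%:R * (p%:R) ^+ k.
  move=> i; rewrite -!natrX -natrM -mulnA -expnD subnK; last first.
    by rewrite (leq_trans hN) // leq_pmulr // subn_gt0.
  by rewrite /M expnMn expnM.
have key : (2 ^ n.+1)%N%:R * (S - E n) = \sum_(i < n) 'C(n, i)%:R *
    2%:R ^+ (n - i.+1) * (2%:R ^+ i.+1 * E i) * (M%:R) ^+ (n - i).
  have hR : \sum_(i < n) 'C(n, i)%:R * 2%:R ^+ (n - i.+1) * (2%:R ^+ i.+1 * E i)
      * (M%:R) ^+ (n - i) =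
    2%:R ^+ n * \sum_(i < n) 'C(n, i)%:R * E i * (M%:R) ^+ (n - i).
    rewrite mulr_sumr; apply: eq_bigr => i _.
    have e : (2%:R : algC) ^+ n = 2%:R ^+ (n - i.+1) * 2%:R ^+ i.+1.
      by rewrite -exprD subnK.
    rewrite e; ring.
  rewrite hR natrX exprSr -mulrA; congr (_ * _).
  by rewrite mulrBr h2; ring.
rewrite key mulr_suml; apply: rpred_sum => i _.
rewrite eM mulrA mulfK //.
apply: rpredM; last exact: rpred_nat.
apply: rpredM; first by rewrite rpredM ?rpredX ?rpred_nat.
exact: (@E_Aint _ _ _ hd hE).
Qed.
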